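(* Let $e,f$ be essential edges of a multigraph $H$, and let $W$ be any walk in $H$ that starts with $e$, ends with $f$, and traverses every edge at most once. Then every edge traversed by $W$ is essential.
   Context: Multigraphs are undirected and may contain parallel edges and self-loops (a self-loop is a cycle of length one, two parallel edges form a cycle of length two). An edge $e$ of $H$ is essential if it lies on a cycle of $H$, or it is a bridge whose removal creates two new connected components each of which contains a cycle. *)

(* Defs.v *)
(* Finite multigraphs: a finite vertex type V, a finite edge
   type E, and an endpoint map [ends : E -> V * V] (read as an unordered pair;
   parallel edges = distinct edges with the same endpoints, a self-loop is an
   edge with [ends e = (v, v)]). *)
From mathcomp Require Import all_boot.
Set Implicit Arguments. Unset Strict Implicit. Unset Printing Implicit Defensive.

Section Multigraph.
Variables (V E : finType) (ends : E -> V * V).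

Definition joins (e : E) (u v : V) : bool :=
  (ends e == (u, v)) || (ends e == (v, u)).

(* A walk starting at vertex [x] is given by its list of steps [(e_i, v_i)]:
   the walk x = v_0, e_1, v_1, ..., e_k, v_k, where e_i joins v_(i-1), v_i. *)
Fixpoint is_walk (x : V) (s : seq (E * V)) : bool :=
  if s is (e, y) :: s' then joins e x y && is_walk y s' else true.

Definition walk_edges (s : seq (E * V)) : seq E := map fst s.
Definition walk_end (x : V) (s : seq (E * V)) : V := last x (map snd s).

(* A cycle: a nonempty closed walk with pairwise distinct edges and pairwise
   distinct vertices v_1, ..., v_k (v_k = v_0).  Length one = self-loop,
   length two = two parallel edges. *)
Definition is_cycle (x : V) (s : seq (E * V)) : bool :=
  [&& is_walk x s, s != [::], walk_end x s == x,
      uniq (walk_edges s) & uniq (map snd s)].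

Definition on_cycle (e : E) : Prop :=
  exists x s, is_cycle x s /\ e \in walk_edges s.

Definition connected_without (e : E) (u v : V) : Prop :=
  exists s, [/\ is_walk u s, e \notin walk_edges s & walk_end u s = v].

(* bridge: removing e disconnects its two endpoints (so loops are never bridges) *)
Definition is_bridge (e : E) : Prop :=
  ~ connected_without e (ends e).1 (ends e).2.

Definition side_has_cycle (e : E) (w : V) : Prop :=
  exists x s, [/\ is_cycle x s, e \notin walk_edges s & connected_without e w x].

Definition essential (e : E) : Prop :=
  on_cycle e \/
  (is_bridge e /\ side_has_cycle e (ends e).1 /\ side_has_cycle e (ends e).2).

End Multigraph.

(* Main.v *)
From Stdlib Require Import Classical.
Require Import Defs.
From mathcomp Require Import all_boot.
Set Implicit Arguments. Unset Strict Implicit. Unset Printing Implicit Defensive.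

Section S.
Variables (V E : finType) (ends : E -> V * V).
Local Notation conn := (connected_without ends).
Local Notation walk := (is_walk ends).
Implicit Types (y u v w a x z : V) (s t c P : seq (E * V)) (e h k g f : E).

Lemma walk_cat y (t1 t2 : seq (E * V)) : walk y (t1 ++ t2) = walk y t1 && walk (walk_end y t1) t2.
Proof. elim: t1 y => [|[e z] t IH] y //=. by rewrite IH andbA. Qed.

Lemma walk_end_cat y (t1 t2 : seq (E * V)) : walk_end y (t1 ++ t2) = walk_end (walk_end y t1) t2.
Proof. by rewrite /walk_end map_cat last_cat. Qed.

Lemma joinsC e u v : joins ends e u v = joins ends e v u.
Proof. by rewrite /joins orbC. Qed.

Lemma joins_ends e u v : joins ends e u v ->
  ((ends e).1 = u /\ (ends e).2 = v) \/ ((ends e).1 = v /\ (ends e).2 = u).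
Proof. by rewrite /joins => /orP [/eqP -> | /eqP ->]; [left|right]. Qed.

Lemma rev_walk x s : walk x s -> exists s',
  [/\ walk (walk_end x s) s', walk_end (walk_end x s) s' = x
    & walk_edges s' = rev (walk_edges s)].
Proof.
elim/last_ind: s => [|t [e y] IH]; first by exists [::].
rewrite -cats1 walk_cat /= andbT => /andP [Ht Hj].
have [t' [H1 H2 H3]] := IH Ht.
exists ((e, walk_end x t) :: t'); split.
- by rewrite walk_end_cat /= joinsC Hj.
- by rewrite walk_end_cat.
- by rewrite /walk_edges map_cat rev_cat /= -H3.
Qed.

Lemma conn_refl k u : conn k u u.
Proof. by exists [::]. Qed.

Lemma conn_trans k u v w : conn k u v -> conn k v w -> conn k u w.
Proof.
move=> [s1 [H1 H2 H3]] [s2 [H4 H5 H6]]; exists (s1 ++ s2); split.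
- by rewrite walk_cat H1 H3 H4.
- by rewrite /walk_edges map_cat mem_cat negb_or H2 H5.
- by rewrite walk_end_cat H3.
Qed.

Lemma conn_sym k u v : conn k u v -> conn k v u.
Proof.
move=> [s [H1 H2 H3]]; have [s' [H4 H5 H6]] := rev_walk H1.
exists s'; split; rewrite -?H3 //. by rewrite H6 mem_rev.
Qed.

Lemma split_edge h s : h \in walk_edges s -> exists s1 z s2, s = s1 ++ (h,z) :: s2.
Proof.
elim: s => [|[e z] t IH] //=. rewrite in_cons => /orP [/eqP ->|/IH [s1 [w [s2 ->]]]].
- by exists [::], z, t.
- by exists ((e,z)::s1), w, s2.
Qed.

Lemma split_vert v s : v \in map snd s -> exists s1 e s2, s = s1 ++ (e,v) :: s2.
Proof.
elim: s => [|[e z] t IH] //=. rewrite in_cons => /orP [/eqP ->|/IH [s1 [w [s2 ->]]]].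
- by exists [::], e, t.
- by exists ((e,z)::s1), w, s2.
Qed.

Lemma lemW y c h k : walk y c -> h \in walk_edges c -> k \notin walk_edges c ->
  conn k y (ends h).1 /\ conn k y (ends h).2.
Proof.
move=> Hw Hh Hk; have [c1 [w [c2 Ec]]] := split_edge Hh; subst c.
move: Hw; rewrite walk_cat /= => /and3P [Hw1 Hj _].
move: Hk; rewrite /walk_edges map_cat mem_cat /= in_cons negb_or => /andP [Hk1 /norP [Hkh _]].
have C1 : conn k y (walk_end y c1) by exists c1.
have C2 : conn k y w.
  exists (c1 ++ [:: (h, w)]); split.
  - by rewrite walk_cat Hw1 /= Hj.
  - by rewrite /walk_edges map_cat mem_cat negb_or Hk1 /= mem_seq1 Hkh.
  - by rewrite walk_end_cat.
by case: (joins_ends Hj) => [[-> ->]|[-> ->]].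
Qed.

Lemma conn_edge h k : h != k -> conn k (ends h).1 (ends h).2.
Proof.
move=> Hhk; exists [:: (h, (ends h).2)]; split => //.
- by rewrite /= /joins -surjective_pairing eqxx.
- by rewrite /= mem_seq1 eq_sym.
Qed.

Lemma endpoints y t h : walk y t -> h \in walk_edges t ->
  (ends h).1 \in y :: map snd t /\ (ends h).2 \in y :: map snd t.
Proof.
elim: t y => [|[e z] t IH] y //=. move=> /andP [Hj Ht]. rewrite in_cons => /orP [/eqP ->|Hh].
- by case: (joins_ends Hj) => [[-> ->]|[-> ->]]; split; rewrite !in_cons eqxx ?orbT.
- have [H1 H2] := IH z Ht Hh. by rewrite in_cons H1 in_cons H2 !orbT.
Qed.

Lemma uniq_edges y t : walk y t -> uniq (y :: map snd t) -> uniq (walk_edges t).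
Proof.
elim: t y => [|[e z] t IH] y //=. move=> /andP [Hj Ht] /andP [Hy Hu].
rewrite (IH z Ht Hu) andbT. apply/negP => He.
have [H1 H2] := endpoints Ht He.
by case: (joins_ends Hj) => [[E1 E2]|[E1 E2]]; [move: H1|move: H2]; rewrite ?E1 ?E2 => H; rewrite H in Hy.
Qed.

Lemma shorten_walk u s : walk u s -> exists t,
  [/\ walk u t, walk_end u t = walk_end u s,
      {subset walk_edges t <= walk_edges s} & uniq (u :: map snd t)].
Proof.
elim: s u => [|[e z] s IH] u /=.
  by move=> _; exists [::].
move=> /andP [Hj Hs]. have [t [H1 H2 H3 H4]] := IH z Hs.
case: (boolP (u \in z :: map snd t)) => Hu.
- rewrite in_cons in Hu; case/orP: Hu => [/eqP Euz|Hu].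
  + subst z. exists t; split => //.
    move=> h /H3 Hh. by rewrite in_cons Hh orbT.
  + have [t1 [e' [t2 Et]]] := split_vert Hu; subst t.
    move: H1; rewrite walk_cat /= => /and3P [_ _ Hw2].
    exists t2; split => //.
    * by transitivity (walk_end z s) => //; rewrite -H2 walk_end_cat.
    * move=> h Hh; rewrite in_cons H3 ?orbT //.
      by rewrite /walk_edges map_cat mem_cat /= in_cons Hh !orbT.
    * by move: H4; rewrite map_cat /= => /andP [_]; rewrite cat_uniq => /and3P [_ _ H].
- exists ((e,z)::t); split => //=.
  + by rewrite Hj H1.
  + move=> h; rewrite !in_cons => /orP [->//|/H3 ->]; by rewrite orbT.
  + by apply/andP; split.
Qed.

Lemma cycle_of_conn g : conn g (ends g).1 (ends g).2 -> on_cycle ends g.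
Proof.
move=> [s [Hw Hg He]].
have [t [H1 H2 H3 H4]] := shorten_walk Hw.
have Hgt : g \notin walk_edges t by apply/negP => /H3; apply/negP.
exists (ends g).1, (t ++ [:: (g, (ends g).1)]).
split; last by rewrite /walk_edges map_cat mem_cat /= mem_seq1 eqxx orbT.
apply/and5P; split.
- rewrite walk_cat H1 /= H2 He /joins andbT.
  by rewrite [ends g in X in _ || X]surjective_pairing eqxx orbT.
- by case: t {H1 H2 H3 H4 Hgt}.
- by rewrite walk_end_cat.
- have := uniq_edges H1 H4; move: Hgt; rewrite /walk_edges => Hgt' Hu'.
  by rewrite map_cat cat_uniq Hu' /= orbF Hgt'.
- move: H4 => /= /andP [Hn Hu].
  by rewrite map_cat cat_uniq Hu /= orbF Hn.
Qed.

Lemma lemB g e w a : side_has_cycle ends e w -> ~ conn e w (ends g).1 ->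
  conn g w a -> side_has_cycle ends g a.
Proof.
move=> [y [c [Hc Hec Hwy]]] Hn Hwa.
have Hc' := Hc; move/and5P: Hc' => [Hw _ _ _ _].
have Hgc : g \notin walk_edges c.
  apply/negP => Hg; apply: Hn.
  have [C1 _] := lemW Hw Hg Hec. exact: conn_trans Hwy C1.
move: Hwy => [P [HP HeP HPe]].
have HgP : g \notin walk_edges P.
  apply/negP => Hg; apply: Hn. by have [C1 _] := lemW HP Hg HeP.
exists y, c; split => //.
apply: conn_trans (conn_sym Hwa) _. by exists P.
Qed.

Lemma lemA g e a : ~ on_cycle ends g -> e != g -> essential ends e ->
  conn g (ends e).1 a -> side_has_cycle ends g a.
Proof.
move=> Hcg Heg [[y [c [Hc Hec]]]|[Hb [S1 S2]]] Hea.
- have Hc' := Hc; move/and5P: Hc' => [Hw _ _ _ _].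
  have Hgc : g \notin walk_edges c.
    by apply/negP => Hg; apply: Hcg; exists y, c.
  have [C1 _] := lemW Hw Hec Hgc.
  exists y, c; split => //.
  exact: conn_trans (conn_sym Hea) (conn_sym C1).
- case: (classic (conn e (ends e).1 (ends g).1)) => H1.
  + apply: (lemB S2).
    * move=> H2; apply: Hb. exact: conn_trans H1 (conn_sym H2).
    * exact: conn_trans (conn_sym (conn_edge Heg)) Hea.
  + exact: (lemB S1 H1).
Qed.

Lemma head_split (l1 l2 : seq E) h e : ohead (l1 ++ h :: l2) = Some e -> e = h \/ e \in l1.
Proof. case: l1 => [|x l1] /= [->]; [left|right] => //. by rewrite in_cons eqxx. Qed.

Lemma last_split (l1 l2 : seq E) h f : ohead (rev (l1 ++ h :: l2)) = Some f -> f = h \/ f \in l2.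
Proof.
case/lastP: l2 => [|l2 y].
- by rewrite rev_cat /= => [[->]]; left.
- rewrite -rcons_cons -rcons_cat rev_rcons /= => [[->]]; right.
  by rewrite mem_rcons in_cons eqxx.
Qed.

End S.

Theorem lemma5p2 (V E : finType) (ends : E -> V * V) (e f : E)
    (x : V) (s : seq (E * V)) :
  essential ends e -> essential ends f ->
  is_walk ends x s ->
  uniq (walk_edges s) ->
  ohead (walk_edges s) = Some e ->
  ohead (rev (walk_edges s)) = Some f ->
  forall g, g \in walk_edges s -> essential ends g.
Proof.
move=> Ee Ef Hw Hu Hh Hl g Hg.
case: (eqVneq g e) => [->//|Hge]. case: (eqVneq g f) => [->//|Hgf].
case: (classic (on_cycle ends g)) => Hcg; first by left.
right.
have [s1 [b [s2 Es]]] := split_edge Hg. subst s.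
move: Hw; rewrite walk_cat /= => /and3P [Hw1 Hj Hw2].
move: Hh Hl Hu; rewrite /walk_edges map_cat /= => Hh Hl Hu.
have [Hg1 Hg2] : g \notin walk_edges s1 /\ g \notin walk_edges s2.
  move: Hu; rewrite cat_uniq /= => /and4P [_ Hh' Hn _].
  by move: Hh'; rewrite negb_or => /andP [Hn1 _].
have He1 : e \in walk_edges s1.
  by case: (head_split Hh) => // Eeg; rewrite Eeg eqxx in Hge.
have Hf2 : f \in walk_edges s2.
  by case: (last_split Hl) => // Efg; rewrite Efg eqxx in Hgf.
have Ca : side_has_cycle ends g (walk_end x s1).
  apply: (lemA Hcg _ Ee); first by rewrite eq_sym.
  have [W1 _] := lemW Hw1 He1 Hg1.
  apply: conn_trans (conn_sym W1) _. by exists s1.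
have Cb : side_has_cycle ends g b.
  apply: (lemA Hcg _ Ef); first by rewrite eq_sym.
  have [W1 _] := lemW Hw2 Hf2 Hg2. exact: conn_sym W1.
split; first by move=> C; apply: Hcg; apply: cycle_of_conn.
by case: (joins_ends Hj) => [[-> ->]|[-> ->]].
Qed.
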